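(* Let $Q$ be a quantity space over a field $K$ with a basis $E=\{e_1,\ldots,e_n\}$. Then $\mathsf{E}=\{[e_1],\ldots,[e_n]\}$ is a basis for the abelian group $Q/{\sim}$, and $\mathsf{E}$ has the same cardinality as $E$.
   Context: A scalable monoid over a (unital, associative) ring $R$ is a monoid $X$ (identity $1_X$, product written $xy$) together with a map $R\times X\to X$, $(\alpha,x)\mapsto\alpha\cdot x$, such that $1\cdot x=x$, $\alpha\cdot(\beta\cdot x)=\alpha\beta\cdot x$ and $\alpha\cdot(xy)=(\alpha\cdot x)y=x(\alpha\cdot y)$. A quantity space over a field $K$ is a commutative scalable monoid $Q$ over $K$ for which there exists a finite set $\{e_1,\ldots,e_n\}$ of invertible elements of $Q$ (a basis) such that every $x\in Q$ has a unique expansion $x=\mu\cdot\prod_{i=1}^n e_i^{k_i}$ with $\mu\in K$, $k_i\in\mathbb{Z}$. On $Q$, $x\sim y$ means $\alpha\cdot x=\beta\cdot y$ for some $\alpha,\beta\in K$; $[x]$ is the equivalence class of $x$, and $Q/{\sim}$ is the set of classes with $[x][y]=[xy]$, which is an abelian group. A basis of a finitely generated abelian group $G$ is a set $\{\varepsilon_1,\ldots,\varepsilon_n\}\subseteq G$ such that every $g\in G$ has a unique expansion $g=\prod_{i=1}^n\varepsilon_i^{k_i}$ with $k_i\in\mathbb{Z}$. *)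

(* Defs.v *)
From HB Require Import structures.
From mathcomp Require Import all_boot all_order all_algebra.
From Stdlib Require Import ClassicalEpsilon.
Set Implicit Arguments. Unset Strict Implicit. Unset Printing Implicit Defensive.
Import GRing.Theory.
Local Open Scope ring_scope.

Section Generic.
Variables (M : Type) (mul : M -> M -> M) (one : M).

Definition invertible (x : M) : Prop :=
  exists y, mul x y = one /\ mul y x = one.

Definition minv (x : M) : M :=
  epsilon (inhabits x) (fun y => mul x y = one /\ mul y x = one).

Definition zpow (x : M) (k : int) : M :=
  match k with
  | Posz m => iter m (mul x) one
  | Negz m => iter m.+1 (mul (minv x)) one
  end.

Definition zprod (n : nat) (x : 'I_n -> M) (k : 'I_n -> int) : M :=
  \big[mul/one]_(i < n) zpow (x i) (k i).

Definition group_basis (n : nat) (eps : 'I_n -> M) : Prop :=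
  forall g : M, exists! k : 'I_n -> int, g = zprod eps k.
End Generic.

Section Quantity.
Variables (K : fieldType) (Q : Type) (mul : Q -> Q -> Q) (one : Q)
          (scale : K -> Q -> Q).

Definition scalable_monoid : Prop :=
  (forall x y z, mul x (mul y z) = mul (mul x y) z) /\
  (forall x, mul one x = x) /\
  (forall x, mul x one = x) /\
  (forall x, scale 1 x = x) /\
  (forall a b x, scale a (scale b x) = scale (a * b) x) /\
  (forall a x y, scale a (mul x y) = mul (scale a x) y
                 /\ scale a (mul x y) = mul x (scale a y)).

Definition qs_basis (n : nat) (e : 'I_n -> Q) : Prop :=
  (forall i, invertible mul one (e i)) /\
  forall x : Q, exists! p : K * ('I_n -> int),
      x = scale p.1 (zprod mul one e p.2).

Definition quantity_space : Prop :=
  [/\ scalable_monoid,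
      (forall x y, mul x y = mul y x)
    & exists n (e : 'I_n -> Q), qs_basis e].

Definition qsim (x y : Q) : Prop := exists a b : K, scale a x = scale b y.

Definition qclass_pred (x : Q) : Q -> Prop := qsim x.

Definition qclasses := {C : Q -> Prop | exists x, C = qclass_pred x}.

Definition qclass (x : Q) : qclasses :=
  exist (fun C => exists y, C = qclass_pred y) (qclass_pred x) (ex_intro _ x erefl).

Definition qrep (C : qclasses) : Q :=
  proj1_sig (constructive_indefinite_description _ (proj2_sig C)).

Definition qclass_mul (C D : qclasses) : qclasses :=
  qclass (mul (qrep C) (qrep D)).

Definition qclass_one : qclasses := qclass one.
End Quantity.

Arguments qclass_mul {K Q} mul scale C D.
Arguments qclass_one {K Q} one scale.

(* Main.v *)
Require Import Defs.
From mathcomp Require Import all_boot all_order all_algebra.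
From Stdlib Require Import ClassicalEpsilon ProofIrrelevance FunctionalExtensionality PropExtensionality.
Set Implicit Arguments. Unset Strict Implicit. Unset Printing Implicit Defensive.

Section Mon.
Variables (M : Type) (mul : M -> M -> M) (one : M).

Lemma minv_spec x : invertible mul one x ->
  mul x (minv mul one x) = one /\ mul (minv mul one x) x = one.
Proof. move=> H. rewrite /minv. exact: (epsilon_spec (inhabits x) (fun y => _) H). Qed.

Hypothesis mulA : forall x y z, mul x (mul y z) = mul (mul x y) z.
Hypothesis mul1 : forall x, mul one x = x.
Hypothesis mulr1 : forall x, mul x one = x.

Lemma inv_uniq x y z : mul x y = one -> mul y x = one -> mul x z = one ->
  y = z.
Proof. move=> h1 h2 h3. by rewrite -[y]mulr1 -h3 mulA h2 mul1. Qed.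

Lemma big_one n (F : 'I_n -> M) : (forall j, F j = one) ->
  \big[mul/one]_(j < n) F j = one.
Proof.
elim: n F => [|n IH] F H; first by rewrite big_ord0.
by rewrite big_ord_recl H IH // mul1.
Qed.

Lemma big_single n (F : 'I_n -> M) i : (forall j, j != i -> F j = one) ->
  \big[mul/one]_(j < n) F j = F i.
Proof.
elim: n F i => [|n IH] F i H; first by case: i H.
rewrite big_ord_recl. move: H; case: (unliftP ord0 i) => [i'|] -> H.
- rewrite H ?mul1; last by rewrite neq_lift.
  apply: (IH (fun j => F (lift ord0 j))) => j hj; apply: H.
  by rewrite (inj_eq (@lift_inj _ ord0)).
- rewrite big_one ?mulr1 // => j; apply: H; by rewrite eq_sym neq_lift.
Qed.
End Mon.

Section Hom.
Variables (M : Type) (mulM : M -> M -> M) (oneM : M).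
Variables (N : Type) (mulN : N -> N -> N) (oneN : N).
Hypothesis mulA : forall x y z, mulN x (mulN y z) = mulN (mulN x y) z.
Hypothesis mul1 : forall x, mulN oneN x = x.
Hypothesis mulr1 : forall x, mulN x oneN = x.
Variable f : M -> N.
Hypothesis fM : forall x y, f (mulM x y) = mulN (f x) (f y).
Hypothesis f1 : f oneM = oneN.

Lemma hom_minv x : invertible mulM oneM x ->
  f (minv mulM oneM x) = minv mulN oneN (f x).
Proof.
move=> Hx. have [h1 h2] := minv_spec Hx.
have HN : invertible mulN oneN (f x).
  by exists (f (minv mulM oneM x)); rewrite -!fM h1 h2 f1.
have [h3 h4] := minv_spec HN.
apply: (inv_uniq mulA mul1 mulr1 (x := f x)) => //; by rewrite -fM ?h1 ?h2 f1.
Qed.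

Lemma hom_zpow x k : invertible mulM oneM x ->
  f (zpow mulM oneM x k) = zpow mulN oneN (f x) k.
Proof.
move=> Hx; case: k => m /=.
  elim: m => [|m IH]; first exact: f1.
  by rewrite !iterS fM IH.
rewrite -hom_minv //.
elim: m => [|m IH]; first by rewrite /= fM f1.
by rewrite iterS [in RHS]iterS fM IH.
Qed.

Lemma hom_zprod n (x : 'I_n -> M) k : (forall i, invertible mulM oneM (x i)) ->
  f (zprod mulM oneM x k) = zprod mulN oneN (fun i => f (x i)) k.
Proof.
rewrite /zprod; elim: n x k => [|n IH] x k Hx; first by rewrite !big_ord0.
rewrite !big_ord_recl fM hom_zpow //.
by rewrite (IH (fun i => x (lift ord0 i)) (fun i => k (lift ord0 i))).
Qed.
End Hom.

Import GRing.Theory.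

Section QS.
Variables (K : fieldType) (Q : Type) (mul : Q -> Q -> Q) (one : Q)
          (scale : K -> Q -> Q).
Hypothesis mulA : forall x y z, mul x (mul y z) = mul (mul x y) z.
Hypothesis mul1 : forall x, mul one x = x.
Hypothesis mulr1 : forall x, mul x one = x.
Hypothesis sc1 : forall x, scale 1 x = x.
Hypothesis scA : forall a b x, scale a (scale b x) = scale (a * b)%R x.
Hypothesis scM : forall a x y, scale a (mul x y) = mul (scale a x) y
                 /\ scale a (mul x y) = mul x (scale a y).

Notation sim := (qsim scale).

Lemma sim_refl x : sim x x. Proof. by exists 1%R, 1%R. Qed.
Lemma sim_sym x y : sim x y -> sim y x. Proof. by case=> a [b h]; exists b, a. Qed.
Lemma sim_trans x y z : sim x y -> sim y z -> sim x z.
Proof.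
case=> a [b h1] [c [d h2]]; exists (c * a)%R, (b * d)%R.
by rewrite -(scA c a x) h1 (scA c b y) (mulrC c b) -(scA b c y) h2 scA.
Qed.
Lemma sim_mul x x' y y' : sim x x' -> sim y y' -> sim (mul x y) (mul x' y').
Proof.
case=> a [b h1] [c [d h2]]; exists (a * c)%R, (b * d)%R.
rewrite -(scA a c) (proj2 (scM c x y)) (proj1 (scM a x (scale c y))) h1 h2.
by rewrite -(proj1 (scM b x' (scale d y'))) -(proj2 (scM d x' y')) scA.
Qed.

Lemma class_eq x y : sim x y -> qclass scale x = qclass scale y.
Proof.
move=> h; apply: eq_sig_hprop => [C p q|]; first exact: proof_irrelevance.
rewrite /= /qclass_pred. apply: functional_extensionality => z.
apply: propositional_extensionality; split => h'.
  exact: sim_trans (sim_sym h) h'.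
exact: sim_trans h h'.
Qed.

Lemma class_sim x y : qclass scale x = qclass scale y -> sim x y.
Proof.
move/(congr1 (@proj1_sig _ _)) => /= h.
have : qclass_pred scale y y := sim_refl y.
by rewrite -h.
Qed.

Lemma rep_class C : qclass scale (qrep C) = C.
Proof.
apply: eq_sig_hprop => [D p q|]; first exact: proof_irrelevance.
symmetry; exact: (proj2_sig (constructive_indefinite_description _ (proj2_sig C))).
Qed.

Lemma class_mul x y :
  qclass_mul mul scale (qclass scale x) (qclass scale y) = qclass scale (mul x y).
Proof.
rewrite /qclass_mul; apply: class_eq; apply: sim_mul; apply: class_sim;
  by rewrite rep_class.
Qed.

Lemma NA C D E : qclass_mul mul scale C (qclass_mul mul scale D E) =
  qclass_mul mul scale (qclass_mul mul scale C D) E.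
Proof.
by rewrite -[C]rep_class -[D]rep_class -[E]rep_class !class_mul mulA.
Qed.
Lemma N1 C : qclass_mul mul scale (qclass_one one scale) C = C.
Proof. by rewrite -[C]rep_class /qclass_one class_mul mul1. Qed.
Lemma Nr1 C : qclass_mul mul scale C (qclass_one one scale) = C.
Proof. by rewrite -[C]rep_class /qclass_one class_mul mulr1. Qed.
End QS.

Theorem proposition3p19 (K : fieldType) (Q : Type) (mul : Q -> Q -> Q)
    (one : Q) (scale : K -> Q -> Q)
    (HQ : quantity_space mul one scale)
    (n : nat) (e : 'I_n -> Q) (He : qs_basis mul one scale e) :
  group_basis (qclass_mul mul scale) (qclass_one one scale)
              (fun i => qclass scale (e i))
  /\ injective (fun i => qclass scale (e i)).
Proof.
case: HQ => [[mulA [mul1 [mulr1 [sc1 [scA scM]]]]] mulC _].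
case: He => Hinv Huniq.
have hz k : zprod (qclass_mul mul scale) (qclass_one one scale)
    (fun i => qclass scale (e i)) k = qclass scale (zprod mul one e k).
  symmetry; apply: hom_zprod => //.
  - exact: (NA mulA scA scM).
  - exact: (N1 mul1 scA scM).
  - exact: (Nr1 mulr1 scA scM).
  - by move=> x y; rewrite (class_mul scA scM).
split.
- move=> g.
  have [[mu k0] [hx huniq]] := Huniq (qrep g).
  exists k0; split.
    rewrite hz -[g]rep_class; apply: (class_eq scA).
    by exists 1%R, mu; rewrite sc1 {1}hx.
  move=> k. rewrite hz. rewrite -[g]rep_class. move=> hk; have [a [b h]] := class_sim hk.
  have [p [_ hp]] := Huniq (scale a (qrep g)).
  have e1 : p = ((a * mu)%R, k0) by apply: hp; rewrite /= {1}hx scA.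
  have e2 : p = (b, k) by apply: hp.
  by have := congr1 snd (etrans (esym e1) e2).
- move=> i j hij; have [a [b h]] := class_sim hij.
  have dE l : e l = scale 1%R (zprod mul one e (fun m => (Posz (m == l)))).
    rewrite sc1 /zprod (big_single mul1 mulr1 (i:=l)); first by rewrite eqxx /= mulr1.
    by move=> m /negbTE ->.
  have [p [_ hp]] := Huniq (scale a (e i)).
  have e1 : p = (a, fun m => (Posz (m == i))) by apply: hp; rewrite /= {1}(dE i) scA GRing.mulr1.
  have e2 : p = (b, fun m => (Posz (m == j))) by apply: hp; rewrite /= h {1}(dE j) scA GRing.mulr1.
  have := congr1 (fun q => q.2 i) (etrans (esym e1) e2) => /=.
  by rewrite eqxx; case: eqP.
Qed.
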